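(* Let $\mathfrak g$ be a finite-dimensional simple Lie algebra over $\mathbb R$ or $\mathbb C$ and let $T$ be a maximal Lie triple subsystem of $\mathfrak g$. Then either $T$ is a maximal subalgebra of $\mathfrak g$, or $\mathfrak g=[T,T]\oplus T$ is a nontrivial $\mathbb Z_2$-grading of $\mathfrak g$ with even part $[T,T]$ and odd part $T$.
   Context: A Lie algebra $\mathfrak g$ is regarded as a Lie triple system with triple product $[x,y,z]:=[[x,y],z]$. A Lie triple subsystem of $\mathfrak g$ is a vector subspace $T$ with $[[T,T],T]\subseteq T$. A maximal Lie triple subsystem is a proper Lie triple subsystem not properly contained in any other proper Lie triple subsystem. $[T,T]$ denotes the span of all brackets $[x,y]$, $x,y\in T$. *)

(* Defs.v *)
From HB Require Import structures.
From mathcomp Require Import all_boot all_order all_algebra.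
From mathcomp Require Import reals.
From mathcomp Require Import complex.
Set Implicit Arguments. Unset Strict Implicit. Unset Printing Implicit Defensive.
Import Order.TTheory GRing.Theory Num.Theory.
Local Open Scope ring_scope.

Definition RorC (R : realType) (b : bool) : fieldType :=
  if b then (R : fieldType) else (R[i] : fieldType).

Section Lie.
Variables (K : fieldType) (V : vectType K).

Definition lie_bracket (br : V -> V -> V) : Prop :=
  [/\ (forall (a : K) (x y z : V), br (a *: x + y) z = a *: br x z + br y z),
      (forall (a : K) (x y z : V), br z (a *: x + y) = a *: br z x + br z y),
      (forall x : V, br x x = 0) &
      (forall x y z : V, br x (br y z) + br y (br z x) + br z (br x y) = 0)].

Variable br : V -> V -> V.

Definition lie_ideal (I : {vspace V}) : Prop :=
  forall x y, y \in I -> br x y \in I.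

Definition lie_simple : Prop :=
  (exists x y, br x y != 0) /\
  forall I : {vspace V}, lie_ideal I -> I = 0%VS \/ I = fullv.

Definition lie_subalgebra (S : {vspace V}) : Prop :=
  forall x y, x \in S -> y \in S -> br x y \in S.

Definition lie_triple_system (T : {vspace V}) : Prop :=
  forall x y z, x \in T -> y \in T -> z \in T -> br (br x y) z \in T.

Definition maximal_subalgebra (S : {vspace V}) : Prop :=
  [/\ lie_subalgebra S, S != fullv &
      forall U : {vspace V}, lie_subalgebra U -> (S <= U)%VS -> U != fullv -> U = S].

Definition maximal_lie_triple_system (T : {vspace V}) : Prop :=
  [/\ lie_triple_system T, T != fullv &
      forall U : {vspace V}, lie_triple_system U -> (T <= U)%VS -> U != fullv -> U = T].

(* [A, B] : the span of all brackets [a, b], a in A, b in B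
   (by bilinearity, spanned by brackets of basis vectors). *)
Definition bracket_span (A B : {vspace V}) : {vspace V} :=
  << [seq br a b | a <- vbasis A, b <- vbasis B] >>%VS.

Definition Z2_grading (g0 g1 : {vspace V}) : Prop :=
  [/\ (g0 + g1)%VS = fullv, directv (g0 + g1),
      (forall x y, x \in g0 -> y \in g0 -> br x y \in g0),
      (forall x y, x \in g0 -> y \in g1 -> br x y \in g1) &
      (forall x y, x \in g1 -> y \in g1 -> br x y \in g0)].

End Lie.

(* Main.v *)
Require Import Defs.
From HB Require Import structures.
From mathcomp Require Import all_boot all_order all_algebra.
From mathcomp Require Import reals.
From mathcomp Require Import complex.
Local Open Scope ring_scope.
Set Implicit Arguments. Unset Strict Implicit. Unset Printing Implicit Defensive.
Import GRing.Theory.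
Section L.
Variables (K : fieldType) (V : vectType K).

Lemma span_ind (P : V -> Prop) (X : seq V) :
  P 0 -> (forall a x y, P x -> P y -> P (a *: x + y)) ->
  (forall v, v \in X -> P v) -> forall v, v \in <<X>>%VS -> P v.
Proof.
move=> P0 PC PX v /(coord_span (X:=in_tuple X)) ->.
apply: (big_ind P) => //.
  by move=> x y Px Py; have := PC 1 x y Px Py; rewrite scale1r.
move=> i _; have := PC (coord (in_tuple X) i v) X`_i 0 (PX _ (mem_nth 0 (ltn_ord i))) P0.
by rewrite addr0.
Qed.

Lemma vs_ind (P : V -> Prop) (U : {vspace V}) :
  P 0 -> (forall a x y, P x -> P y -> P (a *: x + y)) ->
  (forall v, v \in U -> P v) -> forall v, v \in U -> P v.
Proof. by move=> _ _ H. Qed.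

Variable br : V -> V -> V.
Hypothesis hbr : lie_bracket br.

Lemma brDZl a x y z : br (a *: x + y) z = a *: br x z + br y z.
Proof. by case: hbr. Qed.
Lemma brDZr a x y z : br z (a *: x + y) = a *: br z x + br z y.
Proof. by case: hbr. Qed.
Lemma br0l z : br 0 z = 0.
Proof.
have := brDZl 1 0 0 z; rewrite !scale1r addr0 => H.
by apply: (addrI (br 0 z)); rewrite -H addr0.
Qed.
Lemma br0r z : br z 0 = 0.
Proof.
have := brDZr 1 0 0 z; rewrite !scale1r addr0 => H.
by apply: (addrI (br z 0)); rewrite -H addr0.
Qed.
Lemma brDl x y z : br (x + y) z = br x z + br y z.
Proof. by have := brDZl 1 x y z; rewrite !scale1r. Qed.
Lemma brDr x y z : br z (x + y) = br z x + br z y.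
Proof. by have := brDZr 1 x y z; rewrite !scale1r. Qed.
Lemma brxx x : br x x = 0. Proof. by case: hbr. Qed.
Lemma brA x y : br x y = - br y x.
Proof.
have := brxx (x + y); rewrite brDl !brDr !brxx add0r addr0 => /eqP.
by rewrite addr_eq0 => /eqP.
Qed.
Lemma jacobi x y z : br x (br y z) + br y (br z x) + br z (br x y) = 0.
Proof. by case: hbr. Qed.

Lemma lin_l (W : {vspace V}) (X : seq V) y :
  (forall v, v \in X -> br v y \in W) -> forall v, v \in <<X>>%VS -> br v y \in W.
Proof.
move=> H; apply: span_ind => //; first by rewrite br0l mem0v.
by move=> a x z Hx Hz; rewrite brDZl memvD ?memvZ.
Qed.
Lemma lin_r (W : {vspace V}) (X : seq V) y :
  (forall v, v \in X -> br y v \in W) -> forall v, v \in <<X>>%VS -> br y v \in W.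
Proof.
move=> H; apply: span_ind => //; first by rewrite br0r mem0v.
by move=> a x z Hx Hz; rewrite brDZr memvD ?memvZ.
Qed.

Lemma memU (U : {vspace V}) v : v \in U -> v \in <<vbasis U>>%VS.
Proof. by rewrite (span_basis (vbasisP U)). Qed.

Lemma br_span_mem (A B : {vspace V}) x y :
  x \in A -> y \in B -> br x y \in bracket_span br A B.
Proof.
move=> /memU xA /memU yB.
apply: (lin_l _ xA) => a aA; apply: (lin_r _ yB) => b bB.
by apply: memv_span; apply: allpairs_f.
Qed.

Lemma bs_ind (A B W : {vspace V}) y :
  (forall a b, a \in A -> b \in B -> br (br a b) y \in W) ->
  forall u, u \in bracket_span br A B -> br u y \in W.
Proof.
move=> H; apply: lin_l => z /allpairsP [[a b] [/= /vbasis_mem aA /vbasis_mem bB ->]].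
exact: H.
Qed.

Variable T : {vspace V}.
Hypothesis hT : lie_triple_system br T.
Notation TT := (bracket_span br T T).

Lemma L1 u t : u \in TT -> t \in T -> br u t \in T.
Proof. by move=> uT tT; apply: (bs_ind _ uT) => a b aT bT; apply: hT. Qed.
Lemma L2 u t : u \in TT -> t \in T -> br t u \in T.
Proof. by move=> uT tT; rewrite brA memvN L1. Qed.
Lemma L3 u v : u \in TT -> v \in TT -> br u v \in TT.
Proof.
move=> uT vT; rewrite brA memvN; apply: (bs_ind _ vT) => c d cT dT.
have -> : br (br c d) u = br c (br d u) + br d (br u c).
  rewrite brA; apply/eqP; rewrite eq_sym -addr_eq0 addrC addrA.
  by rewrite jacobi.
apply: memvD; apply: br_span_mem => //; [exact: L2|exact: L1].
Qed.
Lemma L4 t s : t \in T -> s \in T -> br t s \in TT.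
Proof. exact: br_span_mem. Qed.


Lemma subalg_lts (U : {vspace V}) : lie_subalgebra br U -> lie_triple_system br U.
Proof. by move=> HU x y z xU yU zU; apply: (HU) => //; apply: (HU). Qed.

End L.

Lemma main_gen (K : fieldType) (V : vectType K) (br : V -> V -> V) (T : {vspace V}) :
  lie_bracket br -> lie_simple br -> maximal_lie_triple_system br T ->
  maximal_subalgebra br T \/
  (Z2_grading br (bracket_span br T T) T /\ T != 0%VS).
Proof.
move=> hbr [[x0 [y0 nz]] simp] [hT Tnf Tmax].
pose S := (bracket_span br T T + T)%VS.
have inL u : u \in bracket_span br T T -> u \in S by apply: (subvP (addvSl _ _)).
have inR u : u \in T -> u \in S by apply: (subvP (addvSr _ _)).
have Ssub : lie_subalgebra br S.
  move=> x y /memv_addP[x1 x1T [x2 x2T ->]] /memv_addP[y1 y1T [y2 y2T ->]].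
  rewrite !(brDl hbr) !(brDr hbr); apply: memvD; apply: memvD.
  - by apply: inL; apply: (L3 hbr hT).
  - by apply: inR; apply: (L1 hbr hT).
  - by apply: inR; apply: (L2 hbr hT).
  - by apply: inL; apply: (L4 hbr).
have TS : (T <= S)%VS by apply: addvSr.
case: (eqVneq S fullv) => [Sf | Snf].
  right; split.
    split => //.
    - apply/directv_addP.
      have Iid : lie_ideal br (bracket_span br T T :&: T)%VS.
        move=> x y /memv_capP[yTT yT].
        have : x \in S by rewrite Sf memvf.
        move=> /memv_addP[x1 x1T [x2 x2T ->]].
        rewrite (brDl hbr) memv_cap; apply/andP; split; apply: memvD.
        - exact: (L3 hbr hT).
        - exact: (L4 hbr).
        - exact: (L1 hbr hT).
        - exact: (L2 hbr hT).
      case: (simp _ Iid) => // If.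
      case/eqP: Tnf; apply/eqP; rewrite eqEsubv subvf /= -If.
      exact: capvSr.
    - by move=> x y; apply: (L3 hbr hT).
    - by move=> x y; apply: (L1 hbr hT).
    - by move=> x y; apply: (L4 hbr).
  apply/eqP => T0.
  have TT0 : (bracket_span br T T <= 0)%VS.
    apply/span_subvP => z /allpairsP [[a b] [/= /vbasis_mem aT _ ->]].
    move: aT; rewrite T0 memv0 => /eqP ->.
    by rewrite (br0l hbr) mem0v.
  have S0 : S = 0%VS.
    apply/eqP; rewrite -subv0 subv_add TT0 T0 subvv //.
  have z0 (v : V) : v = 0.
    by apply/eqP; rewrite -memv0 -S0 Sf memvf.
  by move: nz; rewrite (z0 x0) (z0 y0) (br0l hbr) eqxx.
left.
have ST : S = T.
  apply: Tmax => //; exact: subalg_lts.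
split => //.
- by rewrite -ST.
- move=> U Usub TU Unf; apply: Tmax => //; exact: subalg_lts.
Qed.


Unset Implicit Arguments.
Theorem mainTheorem5 (R : realType) (b : bool) (V : vectType (RorC R b))
    (br : V -> V -> V) (T : {vspace V}) :
  lie_bracket br -> lie_simple br -> maximal_lie_triple_system br T ->
  maximal_subalgebra br T \/
  (Z2_grading br (bracket_span br T T) T /\ T != 0%VS).
Proof. exact: main_gen. Qed.
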